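(* Assume additionally that $f(\mathbf x,\cdot)$ is convex for every $\mathbf x\in\mathcal X$. Let $\{\mathbf y_k(\cdot,\cdot)\}_{k\ge0}$ be a sequence of maps $\mathcal X\times\mathcal Y\to\mathbb R^m$ such that $\mathbf y_k(\mathbf x,\mathbf z)\in\mathcal Y$ for all $k,\mathbf x,\mathbf z$, and $\mathbf y_k(\mathbf x,\mathbf z)=\mathbf z$ for all $k\ge0$, $\mathbf x\in\mathcal X$, $\mathbf z\in\mathcal S(\mathbf x)$. Suppose that either (a) for every $\epsilon>0$ there is $k(\epsilon)>0$ such that for all $K>k(\epsilon)$, $\sup_{\mathbf x\in\mathcal X,\mathbf z\in\mathcal Y}\{f(\mathbf x,\mathbf y_K(\mathbf x,\mathbf z))-f^*(\mathbf x)\}\le\epsilon$; or (b) there is $\alpha>0$ such that for every $\epsilon>0$ there is $k(\epsilon)>0$ such that for all $K>k(\epsilon)$, $\sup_{\mathbf x\in\mathcal X,\mathbf z\in\mathcal Y}\|\mathcal R_\alpha(\mathbf x,\mathbf y_K(\mathbf x,\mathbf z))\|\le\epsilon$. For $K\ge1$ let $\phi_K(\mathbf x,\mathbf z):=F(\mathbf x,\mathbf y_K(\mathbf x,\mathbf z))$ and let $(\mathbf x_K,\mathbf z_K)\in\arg\min_{\mathbf x\in\mathcal X,\mathbf z\in\mathcal Y}\phi_K(\mathbf x,\mathbf z)$ (assumed to exist). Then: (1) every limit point $\bar{\mathbf x}$ of $\{\mathbf x_K\}$ satisfies $\bar{\mathbf x}\in\arg\min_{\mathbf x\in\mathcal X}\varphi(\mathbf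 x)$; (2) $\inf_{\mathbf x\in\mathcal X,\mathbf z\in\mathcal Y}\phi_K(\mathbf x,\mathbf z)\to\inf_{\mathbf x\in\mathcal X}\varphi(\mathbf x)$ as $K\to\infty$.
   Context: Let $F,f:\mathbb R^n\times\mathbb R^m\to\mathbb R$ and $\mathcal X\subset\mathbb R^n$, $\mathcal Y\subset\mathbb R^m$. Standing assumptions: (i) $F$ and $f$ are continuous; (ii) $f$ is differentiable, $\nabla f$ is continuous, and there is $L_f>0$ such that for every $\mathbf x\in\mathcal X$ the map $\mathbf y\mapsto\nabla_{\mathbf y}f(\mathbf x,\mathbf y)$ is $L_f$-Lipschitz; (iii) $\mathcal X$ and $\mathcal Y$ are nonempty convex compact sets; (iv) $\mathcal S(\mathbf x):=\arg\min_{\mathbf y\in\mathcal Y}f(\mathbf x,\mathbf y)$ is nonempty for every $\mathbf x\in\mathcal X$. Notation: $f^*(\mathbf x):=\min_{\mathbf y\in\mathcal Y}f(\mathbf x,\mathbf y)$; $\varphi(\mathbf x):=\inf_{\mathbf y\in\mathcal S(\mathbf x)}F(\mathbf x,\mathbf y)$; $\mathtt{Proj}_{\mathcal Y}$ is Euclidean projection onto $\mathcal Y$; for $\alpha>0$, $\mathcal R_\alpha(\mathbf x,\mathbf y):=\mathbf y-\mathtt{Proj}_{\mathcal Y}(\mathbf y-\alpha\nabla_{\mathbf y}f(\mathbf x,\mathbf y))$. *)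

(* Defs.v *)
From HB Require Import structures.
From mathcomp Require Import all_boot all_order all_algebra.
From mathcomp Require Import all_classical all_reals all_analysis.
Set Implicit Arguments. Unset Strict Implicit. Unset Printing Implicit Defensive.
Import Order.TTheory GRing.Theory Num.Theory.
Import numFieldNormedType.Exports.
Local Open Scope classical_set_scope.
Local Open Scope ring_scope.

Section Defs.
Variable R : realType.

Definition enorm (m : nat) (v : 'rV[R]_m) : R :=
  Num.sqrt (\sum_(i < m) v 0 i ^+ 2).

(* Euclidean projection onto C (a point of C minimising the Euclidean
   distance to v; well defined/unique when C is nonempty convex compact) *)
Definition proj (m : nat) (C : set 'rV[R]_m) (v : 'rV[R]_m) : 'rV[R]_m :=
  xget 0 [set p | C p /\ forall q, C q -> enorm (p - v) <= enorm (q - v)].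

Definition grad_x (n m : nat) (f : 'rV[R]_n * 'rV[R]_m -> R)
  (p : 'rV[R]_n * 'rV[R]_m) : 'rV[R]_n :=
  \row_(i < n) ('d f p ((delta_mx 0 i : 'rV[R]_n), (0 : 'rV[R]_m))).

Definition grad_y (n m : nat) (f : 'rV[R]_n * 'rV[R]_m -> R)
  (p : 'rV[R]_n * 'rV[R]_m) : 'rV[R]_m :=
  \row_(j < m) ('d f p ((0 : 'rV[R]_n), (delta_mx 0 j : 'rV[R]_m))).

Definition grad (n m : nat) (f : 'rV[R]_n * 'rV[R]_m -> R)
  (p : 'rV[R]_n * 'rV[R]_m) : 'rV[R]_n * 'rV[R]_m :=
  (grad_x f p, grad_y f p).

Definition Sol (n m : nat) (f : 'rV[R]_n * 'rV[R]_m -> R) (Y : set 'rV[R]_m)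
  (x : 'rV[R]_n) : set 'rV[R]_m :=
  [set y | Y y /\ forall y', Y y' -> f (x, y) <= f (x, y')].

Definition fstar (n m : nat) (f : 'rV[R]_n * 'rV[R]_m -> R) (Y : set 'rV[R]_m)
  (x : 'rV[R]_n) : R := inf [set f (x, y) | y in Y].

Definition varphi (n m : nat) (F f : 'rV[R]_n * 'rV[R]_m -> R)
  (Y : set 'rV[R]_m) (x : 'rV[R]_n) : R :=
  inf [set F (x, y) | y in Sol f Y x].

Definition resid (n m : nat) (f : 'rV[R]_n * 'rV[R]_m -> R) (Y : set 'rV[R]_m)
  (alpha : R) (x : 'rV[R]_n) (y : 'rV[R]_m) : 'rV[R]_m :=
  y - proj Y (y - alpha *: grad_y f (x, y)).

End Defs.

(* Main.v *)
Require Import Defs.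
From HB Require Import structures.
From mathcomp Require Import all_boot all_order all_algebra.
From mathcomp Require Import all_classical all_reals all_analysis.
From mathcomp Require Import lra ring.
Import Order.TTheory GRing.Theory Num.Theory.
Import numFieldNormedType.Exports.
Local Open Scope classical_set_scope.
Local Open Scope ring_scope.
Definition ssq {R : realType} {m} (v : 'rV[R]_m) : R := \sum_(i < m) v 0 i ^+ 2.

Lemma cont_fst (U V : topologicalType) : continuous (@fst U V).
Proof. by move=> p; exact: cvg_fst. Qed.
Lemma cont_snd (U V : topologicalType) : continuous (@snd U V).
Proof. by move=> p; exact: cvg_snd. Qed.

Lemma ssq_cont (R : realType) m : continuous (@ssq R m).
Proof.
have := @continuous_big R 'I_m +%R 0 xpredT add_continuous _
  (index_enum 'I_m) (fun i (v : 'rV[R]_m) => v 0 i ^+ 2).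
apply => i _ v.
exact: (continuous_comp (@coord_continuous R 1 m 0 i v) (@exprn_continuous R 2 _)).
Qed.

Lemma ssq_ge0 (R : realType) m (v : 'rV[R]_m) : 0 <= ssq v.
Proof. by apply: sumr_ge0 => i _; exact: sqr_ge0. Qed.

Lemma ssq_le0 (R : realType) m (v : 'rV[R]_m) : ssq v <= 0 -> v = 0.
Proof.
move=> h; have h0 : ssq v = 0 by apply/le_anti; rewrite h ssq_ge0.
move: h0 => /eqP; rewrite /ssq psumr_eq0; last by move=> i _; exact: sqr_ge0.
move=> /allP H; apply/matrixP => i j; rewrite ord1 mxE.
by have := H j (mem_index_enum _); rewrite /= sqrf_eq0 => /eqP.
Qed.

Lemma enorm_ssq (R : realType) m (v w : 'rV[R]_m) :
  enorm v <= enorm w -> ssq v <= ssq w.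
Proof. by rewrite /enorm ler_sqrt // ssq_ge0. Qed.

Lemma enorm_ssq_le (R : realType) m (v : 'rV[R]_m) e :
  0 < e -> enorm v <= Num.sqrt e -> ssq v <= e.
Proof. by move=> e0; rewrite /enorm ler_sqrt // ltW. Qed.

Lemma ev_ge (P : nat -> Prop) k : (forall N, (k <= N)%N -> P N) -> \forall N \near \oo, P N.
Proof. by move=> H; exists k. Qed.

Lemma ev_c (c : nat -> nat) (Hc : forall N, (N <= c N)%N) (P : nat -> Prop) k :
  (forall K, (k < K)%N -> P K) -> \forall N \near \oo, P (c N).
Proof.
move=> H; apply: (@ev_ge _ k.+1) => N hN; apply: H.
exact: leq_trans hN (Hc N).
Qed.

Lemma proj_spec (R : realType) m (Y : set 'rV[R]_m) (v : 'rV[R]_m) : Y !=set0 -> compact Y ->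
  Y (Defs.proj Y v) /\ forall q, Y q -> enorm (Defs.proj Y v - v) <= enorm (q - v).
Proof.
move=> Y0 cY; rewrite /Defs.proj.
pose P := [set p : 'rV[R]_m | Y p /\ forall q, Y q -> enorm (p - v) <= enorm (q - v)].
suff : P (xget 0 P) by [].
apply: xgetPex.
have cs : continuous (fun q : 'rV[R]_m => ssq (q - v)).
  move=> q.
  have h1 : {for q, continuous (fun q : 'rV[R]_m => q - v)}.
    exact: (cvgB cvg_id (cvg_cst v)).
  exact: (continuous_comp h1 (@ssq_cont R m _)).
have [c /set_mem Yc H] := compact_EVT_min Y0 cY (continuous_subspaceT cs).
exists c; split => // q Yq.
rewrite /enorm ler_sqrt; last exact: ssq_ge0.
exact: (H q (mem_set Yq)).
Qed.
Lemma dgrad (R : realType) n m (f : 'rV[R]_n * 'rV[R]_m -> R) p (d : 'rV[R]_m) :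
  'd f p ((0 : 'rV[R]_n), d) = \sum_(j < m) d 0 j * grad_y f p 0 j.
Proof.
pose L := fun y : 'rV[R]_m => 'd f p ((0 : 'rV[R]_n), y).
have LD : {morph L : x y / x + y}.
  move=> x y; rewrite /L -linearD /=.
  by congr ('d f p _); apply: injective_projections => /=; rewrite ?addr0.
have L0 : L 0 = 0.
  by rewrite /L -[X in 'd f p X]/(0 : 'rV[R]_n * 'rV[R]_m) linear0.
have LZ : forall c y, L (c *: y) = c * L y.
  move=> c y; rewrite /L -[c * _]/(c *: _) -linearZ /=.
  congr ('d f p _); apply: injective_projections => /=; rewrite ?scaler0 //.
rewrite -[LHS]/(L d) {1}(row_sum_delta d).
rewrite (big_morph L LD L0); apply: eq_bigr => j _.
by rewrite LZ /grad_y mxE.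
Qed.
Lemma dir_le (R : realType) (V : normedModType R) (g : V -> R) p v C :
  differentiable g p ->
  (forall t, 0 < t -> t <= 1 -> g (t *: v + p) <= g p + t * C) ->
  'd g p v <= C.
Proof.
move=> dg H.
have D := @diff_derivable _ _ _ g p v dg.
rewrite -deriveE //.
apply: (cvgr_to_le (cvg_dnbhs_at_right D)).
near=> h.
have h0 : 0 < h by near: h; exact: nbhs_right_gt.
have h1 : h <= 1 by near: h; exact: nbhs_right_le.
rewrite /= -[X in _ <= X](mulKf (lt0r_neq0 h0)) .
rewrite /GRing.scale /= ler_pM2l ?invr_gt0 //.
by rewrite lerBlDl H.
Unshelve. all: by end_near.
Qed.

Lemma opt_of_vi (R : realType) n m (f : 'rV[R]_n * 'rV[R]_m -> R) a b q :
  differentiable f (a, b) ->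
  (forall y1 y2 t, 0 <= t -> t <= 1 ->
      f (a, t *: y1 + (1 - t) *: y2) <= t * f (a, y1) + (1 - t) * f (a, y2)) ->
  0 <= \sum_(j < m) (q - b) 0 j * grad_y f (a, b) 0 j ->
  f (a, b) <= f (a, q).
Proof.
move=> df cv vi.
suff H : 'd f (a, b) ((0 : 'rV[R]_n), q - b) <= f (a, q) - f (a, b).
  by rewrite -subr_ge0; apply: le_trans vi _; rewrite -dgrad.
apply: dir_le => // t t0 t1.
have -> : t *: ((0 : 'rV[R]_n), q - b) + (a, b) = (a, t *: q + (1 - t) *: b).
  apply: injective_projections => /=.
    by rewrite scaler0 add0r.
  by rewrite scalerBr scalerBl scale1r addrCA addrC.
apply: le_trans (cv _ _ _ (ltW t0) t1) _.
lra.
Qed.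
Lemma convY (R : realType) m (Y : set 'rV[R]_m) : convex_set Y ->
  forall y1 y2 t, Y y1 -> Y y2 -> 0 <= t -> t <= 1 -> Y (t *: y1 + (1 - t) *: y2).
Proof.
move=> cY y1 y2 t h1 h2 t0 t1.
have := cY y1 y2 (Itv01 t0 t1) (mem_set h1) (mem_set h2).
by rewrite inE.
Qed.

Lemma real_vi (R : realType) (D P al : R) : 0 <= D -> 0 < al ->
  (forall t, 0 < t -> t <= 1 -> 0 <= t ^+ 2 * D + 2 * t * al * P) -> 0 <= P.
Proof.
move=> D0 a0 H; rewrite leNgt; apply/negP => P0.
have q0 : 0 < - (al * P) by rewrite oppr_gt0 pmulr_rlt0.
set t := - (al * P) / (D - al * P).
have den : 0 < D - al * P by lra.
have t0 : 0 < t by rewrite divr_gt0.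
have t1 : t <= 1 by rewrite ler_pdivrMr // mul1r; lra.
have tD : t * (D - al * P) = - (al * P) by rewrite /t mulfVK // gt_eqF.
have := H t t0 t1.
have -> : t ^+ 2 * D + 2 * t * al * P = t * (al * P * (1 + t)).
  have -> : t ^+ 2 * D = t * (t * (D - al * P) + t * (al * P)) by ring.
  rewrite tD; ring.
rewrite pmulr_rge0 // => h.
have : al * P * (1 + t) < 0 by rewrite pmulr_llt0 ?pmulr_rlt0 //; lra.
lra.
Qed.

Lemma vi_of_proj (R : realType) m (Y : set 'rV[R]_m) (b g : 'rV[R]_m) al :
  convex_set Y -> Y b -> 0 < al ->
  (forall q, Y q -> ssq (b - (b - al *: g)) <= ssq (q - (b - al *: g))) ->
  forall q, Y q -> 0 <= \sum_(j < m) (q - b) 0 j * g 0 j.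
Proof.
move=> cY Yb a0 H q Yq.
apply: (@real_vi R (ssq (q - b)) _ al) => //.
  by apply: sumr_ge0 => i _; exact: sqr_ge0.
move=> t t0 t1.
have := H _ (@convY R m Y cY q b t Yq Yb (ltW t0) t1).
rewrite -subr_ge0 /ssq -sumrB.
have -> : t ^+ 2 * (\sum_(i < m) (q - b) 0 i ^+ 2) +
   2 * t * al * (\sum_(j < m) (q - b) 0 j * g 0 j) =
   \sum_(i < m) (t ^+ 2 * ((q - b) 0 i ^+ 2) + 2 * t * al * ((q - b) 0 i * g 0 i)).
  by rewrite big_split /= -!mulr_sumr.
under eq_bigr => i _ do rewrite !mxE.
under [X in _ -> _ <= X]eq_bigr => i _ do rewrite !mxE.
move=> h; apply: le_trans h _; apply: ler_sum => i _.
rewrite le_eqVlt; apply/orP; left; apply/eqP; ring.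
Qed.
Lemma cluster_le (R : realType) (T : topologicalType) (u : nat -> T) c (h : T -> R) :
  cluster (u @ \oo) c -> {for c, continuous h} ->
  (forall e, 0 < e -> \forall k \near \oo, h (u k) <= e) -> h c <= 0.
Proof.
move=> cl hc H; rewrite leNgt; apply/negP => hc0.
have e0 : 0 < h c / 2 by rewrite divr_gt0.
have A := H _ e0.
have B : \forall t \near c, h c / 2 < h t.
  by apply: (@cvgr_gt R _ _ _ h (h c) hc); lra.
have [t [At Bt]] := cl [set t | h t <= h c / 2] _ A B.
move: At Bt => /= At Bt; lra.
Qed.

Lemma seq_cluster (T : topologicalType) (A : set T) (u : nat -> T) :
  compact A -> (\forall k \near \oo, A (u k)) -> exists c, A c /\ cluster (u @ \oo) c.
Proof.
move=> cA HA; have [c [Ac cl]] := cA (u @ \oo) _ HA.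
by exists c.
Qed.

Lemma cluster_map (T U : topologicalType) (u : nat -> T) (g : T -> U) c :
  cluster (u @ \oo) c -> {for c, continuous g} -> cluster ((g \o u) @ \oo) (g c).
Proof.
move=> cl gc A B HA HB.
have HB' : nbhs c (g @^-1` B) by exact: gc.
have [t [At Bt]] := cl (g @^-1` A) _ HA HB'.
by exists (g t).
Qed.

Lemma cluster_cvg_eq (R : realType) n (u : nat -> 'rV[R]_n) a l :
  cluster (u @ \oo) a -> u @ \oo --> l -> a = l.
Proof.
move=> cl ul.
have := cvg_cluster ul cl.
move=> h; apply/esym; exact: norm_hausdorff h.
Qed.

Lemma C1 (R : realType) n m (f : 'rV[R]_n * 'rV[R]_m -> R) (y' : 'rV[R]_m) :
  continuous f -> continuous (fun p : 'rV[R]_n * 'rV[R]_m => f p - f (p.1, y')).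
Proof.
move=> fc p.
have h1 : {for p, continuous (fun p : 'rV[R]_n * 'rV[R]_m => (p.1, y'))}.
  rewrite /prop_for /continuous_at. apply: (@cvg_pair _ _ _ _ (nbhs p.1) (nbhs y')); [exact: cvg_fst | exact: cvg_cst].
exact: (cvgB (fc p) (continuous_comp h1 (fc _))).
Qed.

Lemma C12 (R : realType) n m (t : ('rV[R]_n * 'rV[R]_m) * 'rV[R]_m) :
  {for t, continuous (fun t : ('rV[R]_n * 'rV[R]_m) * 'rV[R]_m => t.1.2)}.
Proof. exact: (@continuous_comp _ _ _ fst snd t (@cont_fst _ _ t) (@cont_snd _ _ _)). Qed.

Lemma C2 (R : realType) n m :
  continuous (fun t : ('rV[R]_n * 'rV[R]_m) * 'rV[R]_m => ssq (t.1.2 - t.2)).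
Proof.
move=> t.
have h : {for t, continuous (fun t : ('rV[R]_n * 'rV[R]_m) * 'rV[R]_m => t.1.2 - t.2)}.
  exact: (@cvgB _ _ _ _ _ (fun t : ('rV[R]_n * 'rV[R]_m) * 'rV[R]_m => t.1.2) (fun t => t.2) _ _ (@C12 R n m t) (@cont_snd _ _ t)).
exact: (continuous_comp h (@ssq_cont R m _)).
Qed.

Lemma C3 (R : realType) n m (G : 'rV[R]_n * 'rV[R]_m -> 'rV[R]_m) (al : R) q :
  continuous G ->
  continuous (fun t : ('rV[R]_n * 'rV[R]_m) * 'rV[R]_m =>
     ssq (t.2 - (t.1.2 - al *: G t.1)) - ssq (q - (t.1.2 - al *: G t.1))).
Proof.
move=> Gc t.
pose T := (('rV[R]_n * 'rV[R]_m) * 'rV[R]_m)%type.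
have hG : {for t, continuous (fun t : T => G t.1)}.
  exact: (@continuous_comp _ _ _ fst G t (@cont_fst _ _ t) (Gc _)).
have hZ : {for t, continuous (fun t : T => al *: G t.1)}.
  exact: (@cvgZ _ _ _ _ _ (fun _ => al) (fun t : T => G t.1) _ _ (cvg_cst al) hG).
have hw : {for t, continuous (fun t : T => t.1.2 - al *: G t.1)}.
  exact: (@cvgB _ _ _ _ _ (fun t : T => t.1.2) (fun t : T => al *: G t.1) _ _ (@C12 R n m t) hZ).
have h1 : {for t, continuous (fun t : T => t.2 - (t.1.2 - al *: G t.1))}.
  exact: (@cvgB _ _ _ _ _ (fun t : T => t.2) (fun t : T => t.1.2 - al *: G t.1) _ _ (@cont_snd _ _ t) hw).
have h2 : {for t, continuous (fun t : T => q - (t.1.2 - al *: G t.1))}.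
  exact: (@cvgB _ _ _ _ _ (fun _ : T => q) (fun t : T => t.1.2 - al *: G t.1) _ _ (cvg_cst q) hw).
have k1 := @continuous_comp _ _ _ _ ssq t h1 (@ssq_cont R m _).
have k2 := @continuous_comp _ _ _ _ ssq t h2 (@ssq_cont R m _).
exact: (@cvgB _ _ _ _ _ (ssq \o (fun t : T => t.2 - (t.1.2 - al *: G t.1)))
   (ssq \o (fun t : T => q - (t.1.2 - al *: G t.1))) _ _ k1 k2).
Qed.

Lemma key (R : realType) n m (f : 'rV[R]_n * 'rV[R]_m -> R)
  (X : set 'rV[R]_n) (Y : set 'rV[R]_m)
  (Hfc : continuous f) (Hfd : forall p, differentiable f p)
  (Hgc : continuous (grad f))
  (HX0 : X !=set0) (HXk : compact X)
  (HY0 : Y !=set0) (HYc : convex_set Y) (HYk : compact Y)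
  (Hconv : forall x, X x -> forall y1 y2 t, 0 <= t -> t <= 1 ->
      f (x, t *: y1 + (1 - t) *: y2) <= t * f (x, y1) + (1 - t) * f (x, y2))
  (yk : nat -> 'rV[R]_n -> 'rV[R]_m -> 'rV[R]_m)
  (HykY : forall k x z, X x -> Y z -> Y (yk k x z))
  (Hab :
     (forall eps : R, 0 < eps -> exists k : nat, (0 < k)%N /\
        forall K : nat, (k < K)%N -> forall x z, X x -> Y z ->
          f (x, yk K x z) - fstar f Y x <= eps)
     \/
     (exists alpha : R, 0 < alpha /\
        forall eps : R, 0 < eps -> exists k : nat, (0 < k)%N /\
          forall K : nat, (k < K)%N -> forall x z, X x -> Y z ->
            enorm (resid f Y alpha x (yk K x z)) <= eps))
  (xs : nat -> 'rV[R]_n) (zs : nat -> 'rV[R]_m)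
  (HXY : forall K : nat, (1 <= K)%N -> X (xs K) /\ Y (zs K))
  (c : nat -> nat) (Hc : forall N, (N <= c N)%N) :
  exists a b, X a /\ Sol f Y a b /\
    cluster ((fun N => (xs (c N), yk (c N) (xs (c N)) (zs (c N)))) @ \oo) (a, b).
Proof.
pose u := fun N => (xs (c N), yk (c N) (xs (c N)) (zs (c N))).
have k1 : forall k K, (0 < k)%N -> (k < K)%N -> (1 <= K)%N.
  by move=> k K h1 h2; exact: ltnW (leq_ltn_trans h1 h2).
have evXY : \forall N \near \oo, (X `*` Y) (u N).
  apply: (@ev_c c Hc (fun K => (X `*` Y) (xs K, yk K (xs K) (zs K))) 0) => K hK.
  have [hx hz] := HXY K hK.
  by split => //=; exact: HykY.
have [fmin Hfmin] : exists fm, forall x y, X x -> Y y -> fm <= f (x, y).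
  have XY0 : (X `*` Y) !=set0.
    by case: HX0 => x hx; case: HY0 => y hy; exists (x, y).
  have [p /set_mem [pX pY] H] :=
    compact_EVT_min XY0 (compact_setX HXk HYk) (continuous_subspaceT Hfc).
  by exists (f p) => x y hx hy; exact: (H (x, y) (mem_set (conj hx hy))).
have fstar_le : forall x y, X x -> Y y -> fstar f Y x <= f (x, y).
  move=> x y hx hy; apply: ge_inf; last by exists y.
  by exists fmin => _ [y' hy' <-]; exact: Hfmin.
case: Hab => [Ha | [al [al0 Hb]]].
  have [[a b] [[/= Xa Yb] cl]] := @seq_cluster _ _ u (compact_setX HXk HYk) evXY.
  exists a, b; split => //; split; last exact: cl; split => // y' Yy'.
  rewrite -subr_le0.
  have := @cluster_le R _ u (a, b) (fun p => f p - f (p.1, y')) cl (@C1 R n m f y' Hfc (a, b)).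
  apply => e e0; have [k [k0 Hk]] := Ha e e0.
  apply: (@ev_c c Hc (fun K => f (xs K, yk K (xs K) (zs K)) - f (xs K, y') <= e) k) => K hK.
  have [hx hz] := HXY K (k1 _ _ k0 hK).
  have := Hk K hK _ _ hx hz; have := fstar_le _ _ hx Yy' => /=; lra.
pose yK := fun K => yk K (xs K) (zs K).
pose p := fun K => Defs.proj Y (yK K - al *: grad_y f (xs K, yK K)).
pose u3 := fun N => (u N, p (c N)).
have ev3 : \forall N \near \oo, (X `*` Y `*` Y) (u3 N).
  apply: (@ev_c c Hc (fun K => (X `*` Y `*` Y) ((xs K, yK K), p K)) 0) => K hK.
  have [hx hz] := HXY K hK.
  split; first by split => //=; exact: HykY.
  by have [] := @proj_spec R m Y (yK K - al *: grad_y f (xs K, yK K)) HY0 HYk.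
have [[[a b] c'] [[[/= Xa Yb] Yc'] cl3]] :=
  @seq_cluster _ _ u3 (compact_setX (compact_setX HXk HYk) HYk) ev3.
have cl : cluster (u @ \oo) (a, b).
  exact: (@cluster_map _ _ u3 fst ((a, b), c') cl3 (@cont_fst _ _ _)).
have bc : b = c'.
  apply/eqP; rewrite -subr_eq0; apply/eqP; apply: ssq_le0.
  have := @cluster_le R _ u3 ((a, b), c') (fun t => ssq (t.1.2 - t.2)) cl3
    (@C2 R n m ((a, b), c')).
  apply => e e0; have [k [k0 Hk]] := Hb (Num.sqrt e) (ltac:(by rewrite sqrtr_gt0) : 0 < Num.sqrt e).
  apply: (@ev_c c Hc (fun K => ssq (yK K - p K) <= e) k) => K hK.
  have [hx hz] := HXY K (k1 _ _ k0 hK).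
  exact: (@enorm_ssq_le R m _ e e0 (Hk K hK _ _ hx hz)).
exists a, b; split => //; split; last exact: cl.
pose g := grad_y f (a, b).
have Hq : forall q, Y q -> ssq (b - (b - al *: g)) <= ssq (q - (b - al *: g)).
  move=> q Yq; rewrite -subr_le0.
  have := @cluster_le R _ u3 ((a, b), c')
    (fun t => ssq (t.2 - (t.1.2 - al *: grad_y f t.1)) - ssq (q - (t.1.2 - al *: grad_y f t.1)))
    cl3 (@C3 R n m (grad_y f) al q _ ((a, b), c')).
  rewrite /= -bc; apply.
    by move=> x; exact: (@continuous_comp _ _ _ (grad f) snd x (Hgc x) (@cont_snd _ _ _)).
  move=> e e0.
  apply: (@ev_c c Hc (fun K => ssq (p K - (yK K - al *: grad_y f (xs K, yK K)))
     - ssq (q - (yK K - al *: grad_y f (xs K, yK K))) <= e) 0) => K hK.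
  have [hx hz] := HXY K hK.
  have [_ H] := @proj_spec R m Y (yK K - al *: grad_y f (xs K, yK K)) HY0 HYk.
  apply: le_trans (ltW e0); rewrite subr_le0.
  exact: (@enorm_ssq R m _ _ (H q Yq)).
split => // q Yq.
exact: (@opt_of_vi R n m f a b q (Hfd _) (Hconv a Xa) (@vi_of_proj R m Y b g al HYc Yb al0 Hq q Yq)).
Qed.
Theorem theorem3p3 (R : realType) (n m : nat)
  (F f : 'rV[R]_n * 'rV[R]_m -> R) (X : set 'rV[R]_n) (Y : set 'rV[R]_m)
  (Lf : R)
  (* (i) continuity *)
  (HFc : continuous F) (Hfc : continuous f)
  (* (ii) differentiability, continuous gradient, Lipschitz y-gradient *)
  (Hfd : forall p, differentiable f p)
  (Hgc : continuous (grad f))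
  (HLf : 0 < Lf)
  (HLip : forall x, X x -> forall y1 y2,
      enorm (grad_y f (x, y1) - grad_y f (x, y2)) <= Lf * enorm (y1 - y2))
  (* (iii) nonempty convex compact sets *)
  (HX0 : X !=set0) (HXc : convex_set X) (HXk : compact X)
  (HY0 : Y !=set0) (HYc : convex_set Y) (HYk : compact Y)
  (* (iv) nonempty lower-level solution sets *)
  (HS : forall x, X x -> Sol f Y x !=set0)
  (* additional: convexity of f(x, .) *)
  (Hconv : forall x, X x -> forall y1 y2 t, 0 <= t -> t <= 1 ->
      f (x, t *: y1 + (1 - t) *: y2) <= t * f (x, y1) + (1 - t) * f (x, y2))
  (* the maps y_k *)
  (yk : nat -> 'rV[R]_n -> 'rV[R]_m -> 'rV[R]_m)
  (HykY : forall k x z, X x -> Y z -> Y (yk k x z))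
  (HykS : forall k x z, X x -> Sol f Y x z -> yk k x z = z)
  (Hab :
     (forall eps : R, 0 < eps -> exists k : nat, (0 < k)%N /\
        forall K : nat, (k < K)%N -> forall x z, X x -> Y z ->
          f (x, yk K x z) - fstar f Y x <= eps)
     \/
     (exists alpha : R, 0 < alpha /\
        forall eps : R, 0 < eps -> exists k : nat, (0 < k)%N /\
          forall K : nat, (k < K)%N -> forall x z, X x -> Y z ->
            enorm (resid f Y alpha x (yk K x z)) <= eps))
  (* minimisers (x_K, z_K) of phi_K(x,z) = F(x, y_K(x,z)) over X x Y, K >= 1 *)
  (xs : nat -> 'rV[R]_n) (zs : nat -> 'rV[R]_m)
  (Hmin : forall K : nat, (1 <= K)%N ->
      X (xs K) /\ Y (zs K) /\
      forall x z, X x -> Y z ->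
        F (xs K, yk K (xs K) (zs K)) <= F (x, yk K x z)) :
  (* (1) every limit point of (x_K) minimises varphi over X *)
  (forall (xbar : 'rV[R]_n) (sigma : nat -> nat),
      (forall k, (sigma k < sigma k.+1)%N) ->
      (xs \o sigma) @ \oo --> xbar ->
      X xbar /\ forall x, X x -> varphi F f Y xbar <= varphi F f Y x)
  /\
  (* (2) convergence of optimal values *)
  ((fun K : nat => inf [set F (x, yk K x z) | x in X & z in Y]) @ \oo
     --> inf [set varphi F f Y x | x in X]).
Proof.
pose yK := fun K => yk K (xs K) (zs K).
have HXY : forall K : nat, (1 <= K)%N -> X (xs K) /\ Y (zs K).
  by move=> K hK; have [? [? _]] := Hmin K hK.
have [Fm HFm] : exists fm, forall x y, X x -> Y y -> fm <= F (x, y).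
  have XY0 : (X `*` Y) !=set0.
    by case: HX0 => x hx; case: HY0 => y hy; exists (x, y).
  have [p /set_mem [pX pY] H] :=
    compact_EVT_min XY0 (compact_setX HXk HYk) (continuous_subspaceT HFc).
  by exists (F p) => x y hx hy; exact: (H (x, y) (mem_set (conj hx hy))).
have vphi_le : forall a b, X a -> Sol f Y a b -> varphi F f Y a <= F (a, b).
  move=> a b Xa Sab; apply: ge_inf; last by exists b.
  by exists Fm => _ [y [hy _] <-]; exact: HFm.
have vphi_ge : forall x, X x -> Fm <= varphi F f Y x.
  move=> x hx; apply: lb_le_inf.
    by have [y hy] := HS x hx; exists (F (x, y)), y.
  by move=> _ [y [hy _] <-]; exact: HFm.
have U : forall K, (1 <= K)%N -> forall x, X x -> F (xs K, yK K) <= varphi F f Y x.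
  move=> K hK x hx; apply: lb_le_inf.
    by have [y hy] := HS x hx; exists (F (x, y)), y.
  move=> _ [y hy <-]; have [hy1 _] := hy.
  rewrite -(HykS K x y hx hy).
  by have [_ [_ H]] := Hmin K hK; exact: H.
have KEY := @key R n m f X Y Hfc Hfd Hgc HX0 HXk HY0 HYc HYk Hconv yk HykY Hab xs zs HXY.
split.
  move=> xbar sigma hs hcv.
  have Hc : forall N, (N <= sigma N)%N.
    by elim=> // N IH; exact: leq_ltn_trans IH (hs N).
  have [a [b [Xa [Sab cl]]]] := KEY sigma Hc.
  have cla := @cluster_map _ _ _ fst (a, b) cl (@cont_fst _ _ _).
  have ea : a = xbar := @cluster_cvg_eq R n (xs \o sigma) a xbar cla hcv.
  subst xbar; split => // x hx.
  apply: le_trans (vphi_le a b Xa Sab) _.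
  rewrite -subr_le0.
  have := @cluster_le R _ _ (a, b) (fun p => F p - varphi F f Y x) cl
    (@cvgB _ _ _ _ _ F (fun _ => varphi F f Y x) _ _ (HFc (a, b)) (cvg_cst _)).
  apply => e e0.
  apply: (@ev_c sigma Hc (fun K => F (xs K, yK K) - varphi F f Y x <= e) 0) => K hK.
  by apply: le_trans (ltW e0); rewrite subr_le0; exact: U.
pose v := fun K : nat => inf [set F (x, yk K x z) | x in X & z in Y].
pose Phi := inf [set varphi F f Y x | x in X].
have vK : forall K, (1 <= K)%N -> v K = F (xs K, yK K).
  move=> K hK; have [hx [hz H]] := Hmin K hK.
  have lb : lbound [set F (x, yk K x z) | x in X & z in Y] (F (xs K, yK K)).
    by move=> _ [x hx' [z hz' <-]]; exact: H.
  apply/le_anti/andP; split.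
    by apply: ge_inf; [exists (F (xs K, yK K)) | exists (xs K) => //; exists (zs K)].
  apply: lb_le_inf => //; exists (F (xs K, yK K)); exists (xs K) => //; exists (zs K) => //.
have PhiU : forall K, (1 <= K)%N -> F (xs K, yK K) <= Phi.
  move=> K hK; apply: lb_le_inf.
    by case: HX0 => x hx; exists (varphi F f Y x), x.
  by move=> _ [x hx <-]; exact: U.
have PhiL : forall a b, X a -> Sol f Y a b -> Phi <= F (a, b).
  move=> a b Xa Sab; apply: le_trans (vphi_le a b Xa Sab).
  apply: ge_inf; last by exists a.
  by exists Fm => _ [x hx <-]; exact: vphi_ge.
apply/cvgrPdist_le => e e0.
change (\forall t \near \oo, `|Phi - v t| <= e).
have H : \forall K \near \oo, Phi - e <= v K.
  have [//|nH] := pselect (\forall K \near \oo, Phi - e <= v K).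
  have ex : forall N, exists K, (N <= K)%N /\ v K < Phi - e.
    move=> N; apply: contrapT => hn; apply: nH; exists N => // K /= hK.
    rewrite leNgt; apply/negP => hlt; apply: hn; by exists K.
  case: (choice ex) => c Hc.
  have [a [b [Xa [Sab cl]]]] := KEY c (fun N => (Hc N).1).
  have : F (a, b) - (Phi - e) <= 0.
    have := @cluster_le R _ _ (a, b) (fun p => F p - (Phi - e)) cl
      (@cvgB _ _ _ _ _ F (fun _ => Phi - e) _ _ (HFc (a, b)) (cvg_cst _)).
    apply => e' e'0.
    apply: (@ev_ge _ 1) => N hN.
    have hc : (1 <= c N)%N := leq_trans hN (Hc N).1.
    have := (Hc N).2; rewrite (vK _ hc) /= => h.
    apply: le_trans (ltW e'0); rewrite subr_le0; exact: ltW.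
  move=> h1; have h2 := PhiL a b Xa Sab; exfalso; lra.
have H1 : \forall K \near \oo, (1 <= K)%N := @ev_ge _ 1 (fun N h => h).
apply: filterS2 H1 H => K hK hv.
rewrite (vK K hK) in hv *.
have := PhiU K hK.
move=> hp; rewrite ger0_norm; [lra | by rewrite subr_ge0].
Qed.
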